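(* Let $N>0$ and $\tau\in(0,1)$. (i) The following are equivalent: $\underline\beta_1(\tau)<4(N+1)$; $4(N+1)-\tau\beta_2^*(\tau)>2(N+1)>\beta_1^{**}(\tau)-\tau\beta_2^*(\tau)$; $\beta_1^{**}(\tau)<4(N+1)$; $\tau\in(0,\tau_0^{(1)})$. Moreover, for every $\tau\in(0,\tau_0^{(1)})$: $$\underline\beta_1(\tau)<4(N+1)=\varphi_2^+(\beta_2^*(\tau)),\quad\text{equivalently}\quad \beta_2^*(\tau)=\varphi_1^+(4(N+1))<\overline\beta_2(\tau),$$ and $\beta_1^{**}(\tau)=\varphi_2^-(\beta_2^*(\tau))<\underline\beta_1(\tau)$. (ii) The following are equivalent: $\underline\beta_2(\tau)<4$; $4-\tau\beta_1^*(\tau)>2>\beta_2^{**}(\tau)-\tau\beta_1^*(\tau)$; $\beta_2^{**}(\tau)<4$; $\tau\in(0,\tau_0^{(2)})$. Moreover, for every $\tau\in(0,\tau_0^{(2)})$: $$\underline\beta_2(\tau)<4=\varphi_1^+(\beta_1^*(\tau)),\quad\text{equivalently}\quad \beta_1^*(\tau)=\varphi_2^+(4)<\overline\beta_1(\tau),$$ and $\beta_2^{**}(\tau)=\varphi_1^-(\beta_1^*(\tau))<\underline\beta_2(\tau)$.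
   Context: With $D=(N+1)^2+2\tau(N+1)+1$: $$\underline\beta_1(\tau)=\tfrac{2}{1-\tau^2}(N+1+\tau+\tau\sqrt D),\qquad \overline\beta_1(\tau)=\tfrac{2}{1-\tau^2}(N+1+\tau+\sqrt D),$$ $$\underline\beta_2(\tau)=\tfrac{2}{1-\tau^2}(1+\tau(N+1)+\tau\sqrt D),\qquad \overline\beta_2(\tau)=\tfrac{2}{1-\tau^2}(1+\tau(N+1)+\sqrt D);$$ $$\beta_1^*(\tau)=4(N+1)+8\tau,\quad \beta_2^*(\tau)=4+8\tau(N+1),\quad \beta_1^{**}(\tau)=8\tau(1+2\tau(N+1)),\quad \beta_2^{**}(\tau)=8\tau(N+1+2\tau);$$ $$\tau_0^{(1)}=\frac{N+1}{1+\sqrt{1+4(N+1)^2}},\qquad \tau_0^{(2)}=\frac{1}{N+1+\sqrt{(N+1)^2+4}};$$ $$\varphi_1^\pm(\beta_1)=2+\tau\beta_1\pm\sqrt{(2+\tau\beta_1)^2-\beta_1(\beta_1-4(N+1))}\quad (0<\beta_1\le\overline\beta_1(\tau)),$$ $$\varphi_2^\pm(\beta_2)=2(N+1)+\tau\beta_2\pm\sqrt{(2(N+1)+\tau\beta_2)^2-\beta_2(\beta_2-4)}\quad (0<\beta_2\le\overline\beta_2(\tau)).$$ *)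

(* Defs.v *)
From HB Require Import structures.
From mathcomp Require Import all_boot all_order all_algebra.
Set Implicit Arguments. Unset Strict Implicit. Unset Printing Implicit Defensive.
Import Order.TTheory GRing.Theory Num.Theory.
Local Open Scope ring_scope.

Section Defs.
Variable R : rcfType.
Variable N : nat.
Local Notation M := (N.+1%:R : R).

Definition Dd (tau : R) : R := M ^+ 2 + 2 * tau * M + 1.

Definition beta1_low (tau : R) : R :=
  2 / (1 - tau ^+ 2) * (M + tau + tau * Num.sqrt (Dd tau)).
Definition beta1_up (tau : R) : R :=
  2 / (1 - tau ^+ 2) * (M + tau + Num.sqrt (Dd tau)).
Definition beta2_low (tau : R) : R :=
  2 / (1 - tau ^+ 2) * (1 + tau * M + tau * Num.sqrt (Dd tau)).
Definition beta2_up (tau : R) : R :=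
  2 / (1 - tau ^+ 2) * (1 + tau * M + Num.sqrt (Dd tau)).

Definition beta1_star (tau : R) : R := 4 * M + 8 * tau.
Definition beta2_star (tau : R) : R := 4 + 8 * tau * M.
Definition beta1_sstar (tau : R) : R := 8 * tau * (1 + 2 * tau * M).
Definition beta2_sstar (tau : R) : R := 8 * tau * (M + 2 * tau).

Definition tau0_1 : R := M / (1 + Num.sqrt (1 + 4 * M ^+ 2)).
Definition tau0_2 : R := 1 / (M + Num.sqrt (M ^+ 2 + 4)).

(* phi functions; written as total functions (the paper uses them only on
   0 < beta <= beta_up tau, where the discriminant is nonnegative). *)
Definition phi1p (tau b1 : R) : R :=
  2 + tau * b1 + Num.sqrt ((2 + tau * b1) ^+ 2 - b1 * (b1 - 4 * M)).
Definition phi1m (tau b1 : R) : R :=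
  2 + tau * b1 - Num.sqrt ((2 + tau * b1) ^+ 2 - b1 * (b1 - 4 * M)).
Definition phi2p (tau b2 : R) : R :=
  2 * M + tau * b2 + Num.sqrt ((2 * M + tau * b2) ^+ 2 - b2 * (b2 - 4)).
Definition phi2m (tau b2 : R) : R :=
  2 * M + tau * b2 - Num.sqrt ((2 * M + tau * b2) ^+ 2 - b2 * (b2 - 4)).
End Defs.

(* Main.v *)
Require Import Defs.
From HB Require Import structures.
From mathcomp Require Import all_boot all_order all_algebra.
From mathcomp Require Import ring lra.
Import Order.TTheory GRing.Theory Num.Theory.
Local Open Scope ring_scope.

Lemma sq_lt_aux (R : rcfType) (x y : R) : 0 <= y -> x ^+ 2 < y ^+ 2 -> x < y.
Proof. move=> hy h; rewrite ltNge; apply/negP => hyx. nra. Qed.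

Lemma sq_gt_aux (R : rcfType) (x y : R) : 0 <= y -> y < x -> 0 < x ^+ 2 - y ^+ 2.
Proof.
move=> hy h; have -> : x ^+ 2 - y ^+ 2 = (x - y) * (x + y) by ring.
apply: mulr_gt0; lra.
Qed.

Lemma sqrt_sq_aux (R : rcfType) (x : R) : 0 <= x -> Num.sqrt (x ^+ 2) = x.
Proof. by move=> hx; rewrite sqrtr_sqr ger0_norm. Qed.

Theorem mainTheorem15 (R : rcfType) (N : nat) (tau : R) :
  (0 < N)%N -> 0 < tau < 1 ->
  let M : R := N.+1%:R in
  (* (i) *)
  (((beta1_low N tau < 4 * M) <->
      (2 * M < 4 * M - tau * beta2_star N tau /\ beta1_sstar N tau - tau * beta2_star N tau < 2 * M))
   /\ ((2 * M < 4 * M - tau * beta2_star N tau /\ beta1_sstar N tau - tau * beta2_star N tau < 2 * M)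
       <-> (beta1_sstar N tau < 4 * M))
   /\ ((beta1_sstar N tau < 4 * M) <-> (0 < tau < tau0_1 R N))
   /\ (tau < tau0_1 R N ->
        (beta1_low N tau < 4 * M /\ 4 * M = phi2p N tau (beta2_star N tau))
        /\ (beta2_star N tau = phi1p N tau (4 * M) /\ beta2_star N tau < beta2_up N tau)
        /\ beta1_sstar N tau = phi2m N tau (beta2_star N tau)
        /\ beta1_sstar N tau < beta1_low N tau))
  /\
  (* (ii) *)
  (((beta2_low N tau < 4) <->
      (2 < 4 - tau * beta1_star N tau /\ beta2_sstar N tau - tau * beta1_star N tau < 2))
   /\ ((2 < 4 - tau * beta1_star N tau /\ beta2_sstar N tau - tau * beta1_star N tau < 2)
       <-> (beta2_sstar N tau < 4))
   /\ ((beta2_sstar N tau < 4) <-> (0 < tau < tau0_2 R N))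
   /\ (tau < tau0_2 R N ->
        (beta2_low N tau < 4 /\ 4 = phi1p N tau (beta1_star N tau))
        /\ (beta1_star N tau = phi2p N tau 4 /\ beta1_star N tau < beta1_up N tau)
        /\ beta2_sstar N tau = phi1m N tau (beta1_star N tau)
        /\ beta2_sstar N tau < beta2_low N tau)).
Proof.
move=> hN /andP[t0 t1] M.
have hM : 2 <= M by rewrite /M ler_nat ltnS.
rewrite /beta1_low /beta1_up /beta2_low /beta2_up /beta1_star /beta2_star
  /beta1_sstar /beta2_sstar /tau0_1 /tau0_2 /phi1p /phi1m /phi2p /phi2m /Dd -/M.
clearbody M.
set k := 1 - tau ^+ 2.
have hk : 0 < k by rewrite /k; nra.
have divlt : forall X c : R, (2 / k * X < c) = (2 * X < c * k).
  by move=> X c; rewrite mulrAC ltr_pdivrMr.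
have ltdiv : forall X c : R, (c < 2 / k * X) = (c * k < 2 * X).
  by move=> X c; rewrite mulrAC ltr_pdivlMr.
rewrite !divlt !ltdiv.
have hD : 0 <= M ^+ 2 + 2 * tau * M + 1 by nra.
set s := Num.sqrt (M ^+ 2 + 2 * tau * M + 1).
have s0 : 0 <= s := sqrtr_ge0 _.
have s2 : s ^+ 2 = M ^+ 2 + 2 * tau * M + 1 by rewrite sqr_sqrtr.
have hr1 : 0 <= 1 + 4 * M ^+ 2 by nra.
set r1 := Num.sqrt (1 + 4 * M ^+ 2).
have r10 : 0 <= r1 := sqrtr_ge0 _.
have r12 : r1 ^+ 2 = 1 + 4 * M ^+ 2 by rewrite sqr_sqrtr.
have hr2 : 0 <= M ^+ 2 + 4 by nra.
set r2 := Num.sqrt (M ^+ 2 + 4).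
have r20 : 0 <= r2 := sqrtr_ge0 _.
have r22 : r2 ^+ 2 = M ^+ 2 + 4 by rewrite sqr_sqrtr.
set g := M - 2 * tau - 4 * M * tau ^+ 2.
set h := 1 - 2 * M * tau - 4 * tau ^+ 2.
have r1gt : 1 < r1 by nra.
have r2gt : M < r2 by nra.
have T1 : (tau < M / (1 + r1)) <-> 0 < g.
  rewrite ltr_pdivlMr; last by lra.
  have e : 4 * M * g = (r1 - 1 - 4 * M * tau) * (r1 + 1 + 4 * M * tau).
    by rewrite /g; nra.
  split => H.
  - have H2 : 4 * M * tau < r1 - 1 by nra.
    have : 0 < 4 * M * g by rewrite e; apply: mulr_gt0; nra.
    nra.
  - have : 0 < (r1 - 1 - 4 * M * tau) * (r1 + 1 + 4 * M * tau) by rewrite -e; nra.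
    move=> H3.
    have H4 : 4 * M * tau < r1 - 1 by nra.
    nra.
have T2 : (tau < 1 / (M + r2)) <-> 0 < h.
  rewrite ltr_pdivlMr; last by lra.
  have e : 4 * h = (r2 - M - 4 * tau) * (r2 + M + 4 * tau).
    by rewrite /h; nra.
  split => H.
  - have H2 : 4 * tau < r2 - M by nra.
    have : 0 < 4 * h by rewrite e; apply: mulr_gt0; nra.
    nra.
  - have : 0 < (r2 - M - 4 * tau) * (r2 + M + 4 * tau) by rewrite -e; nra.
    move=> H3.
    have H4 : 4 * tau < r2 - M by nra.
    nra.
clear r10 r12 hr1 r20 r22 hr2 r1gt r2gt hD.
have P1 : 2 * (M + tau + tau * s) < 4 * M * k <-> 0 < g.
  have eA : (M - tau - 2 * M * tau ^+ 2) ^+ 2 - (tau * s) ^+ 2 = M * k * g.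
    by rewrite exprMn s2 /k /g; ring.
  split => H.
  - have HA : tau * s < M - tau - 2 * M * tau ^+ 2 by rewrite /k in H; nra.
    have : 0 < M * k * g by rewrite -eA; apply: sq_gt_aux => //; apply: mulr_ge0; lra.
    rewrite -mulrA pmulr_rgt0; last by lra.
    by rewrite pmulr_rgt0.
  - have HA : tau * s < M - tau - 2 * M * tau ^+ 2.
      apply: sq_lt_aux; first by rewrite /g in H; nra.
      have : 0 < M * k * g by rewrite -mulrA; apply: mulr_gt0; [lra|apply: mulr_gt0].
      rewrite -eA; lra.
    rewrite /k; nra.
have P2 : (2 * M < 4 * M - tau * (4 + 8 * tau * M) /\
    8 * tau * (1 + 2 * tau * M) - tau * (4 + 8 * tau * M) < 2 * M) <-> 0 < g.
  by rewrite /g; split; [case; nra | move=> H; split; nra].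
have P3 : 8 * tau * (1 + 2 * tau * M) < 4 * M <-> 0 < g.
  by rewrite /g; split => H; nra.
have Q1 : 2 * (1 + tau * M + tau * s) < 4 * k <-> 0 < h.
  have eA : (1 - tau * M - 2 * tau ^+ 2) ^+ 2 - (tau * s) ^+ 2 = k * h.
    by rewrite exprMn s2 /k /h; ring.
  split => H.
  - have HA : tau * s < 1 - tau * M - 2 * tau ^+ 2 by rewrite /k in H; nra.
    have : 0 < k * h by rewrite -eA; apply: sq_gt_aux => //; apply: mulr_ge0; lra.
    by rewrite pmulr_rgt0.
  - have HA : tau * s < 1 - tau * M - 2 * tau ^+ 2.
      apply: sq_lt_aux; first by rewrite /h in H; nra.
      have : 0 < k * h by apply: mulr_gt0.
      rewrite -eA; lra.
    rewrite /k; nra.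
have Q2 : (2 < 4 - tau * (4 * M + 8 * tau) /\
   8 * tau * (M + 2 * tau) - tau * (4 * M + 8 * tau) < 2) <-> 0 < h.
  by rewrite /h; split; [case; nra | move=> H; split; nra].
have Q3 : 8 * tau * (M + 2 * tau) < 4 <-> 0 < h.
  by rewrite /h; split => H; nra.
have e1 : (2 * M + tau * (4 + 8 * tau * M)) ^+ 2 -
        (4 + 8 * tau * M) * (4 + 8 * tau * M - 4) = (2 * g) ^+ 2.
  by rewrite /g; ring.
have e2 : (2 + tau * (4 * M)) ^+ 2 - 4 * M * (4 * M - 4 * M) = (2 + 4 * tau * M) ^+ 2.
  by ring.
have e3 : (2 + tau * (4 * M + 8 * tau)) ^+ 2 -
       (4 * M + 8 * tau) * (4 * M + 8 * tau - 4 * M) = (2 * h) ^+ 2.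
  by rewrite /h; ring.
have e4 : (2 * M + tau * 4) ^+ 2 - 4 * (4 - 4) = (2 * M + 4 * tau) ^+ 2.
  by ring.
rewrite e1 e2 e3 e4; clear e1 e2 e3 e4 divlt ltdiv.
split.
- split; first exact: (iff_trans P1 (iff_sym P2)).
  split; first exact: (iff_trans P2 (iff_sym P3)).
  split; first by split => [/P3 hg|/andP[_ /T1 hg]]; [apply/andP; split=>//; exact/T1 | exact/P3].
  move=> /T1 hg.
  have tq : tau ^+ 2 < 1 / 4.
    have : 0 < M * (1 - 4 * tau ^+ 2).
      have -> : M * (1 - 4 * tau ^+ 2) = g + 2 * tau by rewrite /g; ring.
      lra.
    rewrite pmulr_rgt0; lra.
  split; first split.
  + exact/P1.
  + rewrite sqrt_sq_aux; last by lra.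
    by rewrite /g; ring.
  split; first split.
  + rewrite sqrt_sq_aux; first ring.
    have : 0 <= tau * M by apply: mulr_ge0; lra.
    lra.
  + set L := 1 + 3 * tau * M - 2 * tau ^+ 2 - 4 * tau ^+ 3 * M.
    have eL : (4 + 8 * tau * M) * k = 2 + 2 * tau * M + 2 * L by rewrite /L /k; ring.
    have eS : s ^+ 2 - L ^+ 2 = k * g ^+ 2 by rewrite s2 /L /k /g; ring.
    have : L < s.
      apply: sq_lt_aux => //.
      have : 0 < k * g ^+ 2 by apply: mulr_gt0 => //; apply: exprn_gt0.
      rewrite -eS; lra.
    rewrite eL; lra.
  split.
  + rewrite sqrt_sq_aux; last by lra.
    by rewrite /g; ring.
  + set K := 4 * tau * (1 + 2 * tau * M) * k - M - tau.
    have eK : 8 * tau * (1 + 2 * tau * M) * k = 2 * K + 2 * M + 2 * tau by rewrite /K; ring.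
    have ts0 : 0 <= tau * s by apply: mulr_ge0; lra.
    have : K < tau * s.
      case: (ltrP K 0) => HK; first lra.
      set Q := - M + 4 * tau + 12 * M * tau ^+ 2 - 8 * tau ^+ 3 - 16 * M * tau ^+ 4.
      have eQ : Q - K = tau * (1 - 4 * tau ^+ 2) + 4 * M * tau ^+ 2 * (1 - 2 * tau ^+ 2).
        by rewrite /Q /K /k; ring.
      have p1 : 0 < tau * (1 - 4 * tau ^+ 2) by apply: mulr_gt0; lra.
      have p2 : 0 <= 4 * M * tau ^+ 2 * (1 - 2 * tau ^+ 2).
        apply: mulr_ge0; last lra.
        apply: mulr_ge0; [lra| exact: sqr_ge0].
      have HQ : 0 < Q by lra.
      have eS : (tau * s) ^+ 2 - K ^+ 2 = k * g * Q by rewrite exprMn s2 /K /Q /k /g; ring.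
      apply: sq_lt_aux => //.
      have : 0 < k * g * Q by apply: mulr_gt0 => //; apply: mulr_gt0.
      rewrite -eS; lra.
    rewrite eK; lra.
- split; first exact: (iff_trans Q1 (iff_sym Q2)).
  split; first exact: (iff_trans Q2 (iff_sym Q3)).
  split; first by split => [/Q3 hg|/andP[_ /T2 hg]]; [apply/andP; split=>//; exact/T2 | exact/Q3].
  move=> /T2 hh.
  have tq : tau ^+ 2 < 1 / 4.
    have : 0 <= 2 * M * tau by apply: mulr_ge0; lra.
    rewrite /h in hh; lra.
  split; first split.
  + exact/Q1.
  + rewrite sqrt_sq_aux; last by lra.
    by rewrite /h; ring.
  split; first split.
  + rewrite sqrt_sq_aux; first ring.
    lra.
  + set L := M + 3 * tau - 2 * M * tau ^+ 2 - 4 * tau ^+ 3.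
    have eL : (4 * M + 8 * tau) * k = 2 * M + 2 * tau + 2 * L by rewrite /L /k; ring.
    have eS : s ^+ 2 - L ^+ 2 = k * h ^+ 2 by rewrite s2 /L /k /h; ring.
    have : L < s.
      apply: sq_lt_aux => //.
      have : 0 < k * h ^+ 2 by apply: mulr_gt0 => //; apply: exprn_gt0.
      rewrite -eS; lra.
    rewrite eL; lra.
  split.
  + rewrite sqrt_sq_aux; last by lra.
    by rewrite /h; ring.
  + set K := 4 * tau * (M + 2 * tau) * k - 1 - tau * M.
    have eK : 8 * tau * (M + 2 * tau) * k = 2 * K + 2 + 2 * tau * M by rewrite /K; ring.
    have ts0 : 0 <= tau * s by apply: mulr_ge0; lra.
    have : K < tau * s.
      case: (ltrP K 0) => HK; first lra.
      set Q := - 1 + 4 * M * tau + 12 * tau ^+ 2 - 8 * M * tau ^+ 3 - 16 * tau ^+ 4.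
      have eQ : Q - K = tau * (M * (1 - 4 * tau ^+ 2) + 4 * tau * (1 - 2 * tau ^+ 2)).
        by rewrite /Q /K /k; ring.
      have p1 : 0 < tau * (M * (1 - 4 * tau ^+ 2) + 4 * tau * (1 - 2 * tau ^+ 2)).
        apply: mulr_gt0 => //.
        have : 0 < M * (1 - 4 * tau ^+ 2) by apply: mulr_gt0; lra.
        have : 0 <= 4 * tau * (1 - 2 * tau ^+ 2) by apply: mulr_ge0; lra.
        lra.
      have HQ : 0 < Q by lra.
      have eS : (tau * s) ^+ 2 - K ^+ 2 = k * h * Q by rewrite exprMn s2 /K /Q /k /h; ring.
      apply: sq_lt_aux => //.
      have : 0 < k * h * Q by apply: mulr_gt0 => //; apply: mulr_gt0.
      rewrite -eS; lra.
    rewrite eK; lra.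
Qed.
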